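(* Let $C\le\mathbb{F}^n$ be an $\mathbb{F}$-linear $[n,k,d]$-code with ordered basis $B=(a_1,\dots,a_k)$, and let ${\sf Basis}(B)$ and ${\sf Code}(B)$ be as defined in the context. (a) ${\sf Basis}(B)$ is an ordered basis of ${\sf Code}(B)$. Moreover, ${\sf Code}(B)$ is an $\mathbb{F}$-linear $[n',k',d']$-code with $n'=(k+1)n$, $k'=k+1$ and $d'\ge kd$. (b) Suppose that $C$ is $u$-bounded relative to $B$ for some positive integer $u$. Then $d'=(k+1)d$. Furthermore, ${\sf Code}(B)$ is $ku$-bounded relative to ${\sf Basis}(B)$ if and only if $u\ge d(1+2k^{-1})$.
   Context: $\mathbb{F}$ is an arbitrary field and vectors in $\mathbb{F}^n$ are column vectors. The weight $\mathrm{wt}(x)$ of $x\in\mathbb{F}^n$ is its number of nonzero coordinates. An $[n,k,d]$-code is a $k$-dimensional subspace of $\mathbb{F}^n$ whose minimum distance (the minimum weight of a nonzero codeword) is $d$. Boundedness: let $u$ be a positive integer and let $C$ be an $[n,k,d]$-code with ordered basis $B=(a_1,\dots,a_k)$. Then $C$ is $u$-bounded relative to $B$ if all three of the following hold: (i) $\mathrm{wt}(a_j)=u$ for every $j$; (ii) $\mathrm{wt}\big(\sum_{j=1}^k a_j\big)=d$; (iii) $u\ge d(1+k^{-1})$. Construction: for an ordered basis $B=(a_1,\dots,a_k)$ of a code $C\le\mathbb{F}^n$, set $a_0:=0\in\mathbb{F}^n$. For $m=1,\dots,k+1$, let $a'_m\in\mathbb{F}^{n(k+1)}$ be the column vector made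 of $k+1$ blocks of length $n$. Its $r$-th block, for $r=1,\dots,k+1$, is $a_{r-m}$, where the subscript is read modulo $k+1$ with representatives in $\{0,\dots,k\}$. Thus $a'_1=(0,a_1,\dots,a_k)^T$, $a'_2=(a_k,0,a_1,\dots,a_{k-1})^T$, …, $a'_{k+1}=(a_1,\dots,a_k,0)^T$ in block form. Define ${\sf Basis}(B)=(a'_1,\dots,a'_{k+1})$, and let ${\sf Code}(B)\le\mathbb{F}^{n(k+1)}$ be its $\mathbb{F}$-linear span. *)

(* Defs.v *)
From HB Require Import structures.
From mathcomp Require Import all_boot all_order all_algebra.
Set Implicit Arguments. Unset Strict Implicit. Unset Printing Implicit Defensive.
Import Order.TTheory GRing.Theory Num.Theory.
Local Open Scope ring_scope.

Section Codes.
Variable F : fieldType.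

Definition wt (n : nat) (x : 'cV[F]_n) : nat := #|[set i : 'I_n | x i 0 != 0]|.

Definition is_min_dist (n : nat) (C : {vspace 'cV[F]_n}) (d : nat) : Prop :=
  (exists2 x, x \in C & (x != 0) /\ wt x = d) /\
  (forall x, x \in C -> x != 0 -> (d <= wt x)%N).

Definition is_code (n : nat) (C : {vspace 'cV[F]_n}) (k d : nat) : Prop :=
  \dim C = k /\ is_min_dist C d.

Definition u_bounded (n k : nat) (C : {vspace 'cV[F]_n}) (B : k.-tuple 'cV[F]_n)
    (u : nat) : Prop :=
  [/\ (0 < u)%N, basis_of C B &
    exists d, [/\ is_min_dist C d,
      forall j : 'I_k, wt (tnth B j) = u,
      wt (\sum_(j < k) tnth B j) = d &
      (d%:R * (1 + (k%:R)^-1) <= (u%:R : rat))]].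

(* a_j for j = 0..k, with a_0 = 0 and a_j = j-th basis vector (1-based). *)
Definition blk (n k : nat) (B : k.-tuple 'cV[F]_n) (j : nat) : 'cV[F]_n :=
  if j is j'.+1 then nth 0 B j' else 0.

(* a'_m (0-based m' = m - 1): block r (0-based r' = r - 1) is
   a_{(r - m) mod (k+1)} = a_{(r' + (k+1) - m') mod (k+1)}.
   Blocks are laid out consecutively via mxvec (row-major order). *)
Definition basis_vec (n k : nat) (B : k.-tuple 'cV[F]_n) (m : 'I_k.+1)
    : 'cV[F]_(k.+1 * n) :=
  (mxvec (\matrix_(r < k.+1, p < n) blk B ((r + k.+1 - m) %% k.+1)%N p 0))^T.

Definition Basis (n k : nat) (B : k.-tuple 'cV[F]_n) : k.+1.-tuple 'cV[F]_(k.+1 * n) :=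
  [tuple basis_vec B m | m < k.+1].

Definition Code (n k : nat) (B : k.-tuple 'cV[F]_n) : {vspace 'cV[F]_(k.+1 * n)} :=
  <<Basis B>>%VS.

End Codes.

(* Main.v *)
Require Import Defs.
From HB Require Import structures.
From mathcomp Require Import all_boot all_order all_algebra.
From mathcomp Require Import zify ring.
From Stdlib Require Import Classical.
Import Order.TTheory GRing.Theory Num.Theory.
Set Implicit Arguments. Unset Strict Implicit. Unset Printing Implicit Defensive.
Local Open Scope ring_scope.

Lemma modp_sub (x y p : nat) : (x < p)%N -> (y < p)%N ->
  ((x + p - y) %% p = if (y <= x)%N then x - y else x + p - y)%N.
Proof.
move=> xp yp; case: leqP => yx.
  by rewrite (_ : x + p - y = (x - y) + p)%N ?modnDr ?modn_small //; lia.
by rewrite modn_small //; lia.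
Qed.

Definition eo (k : nat) (r m : 'I_k.+1) : 'I_k.+1 :=
  Ordinal (ltn_pmod (r + k.+1 - m) (ltn0Sn k)).

Lemma eoK k (r : 'I_k.+1) : involutive (eo r).
Proof.
move=> t; apply/val_inj => /=.
have rp := ltn_ord r; have tp := ltn_ord t.
rewrite (modp_sub rp tp); case: leqP => tr.
  rewrite modp_sub //; last by lia.
  by case: leqP => h; lia.
rewrite modp_sub //; last by lia.
by case: leqP => h; lia.
Qed.

Lemma eo_injl k (m : 'I_k.+1) : injective (fun r => eo r m).
Proof.
move=> r s /(congr1 val) /=.
have rp := ltn_ord r; have sp := ltn_ord s; have mp := ltn_ord m.
rewrite !modp_sub //; move=> h; apply/val_inj => /=.
move: h; case: (leqP m r) => ?; case: (leqP m s) => ? h; lia.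
Qed.

Lemma eo0 k (r : 'I_k.+1) : eo r ord0 = r.
Proof. by apply/val_inj => /=; rewrite subn0 modnDr modn_small. Qed.

Section W.
Variable F : fieldType.

Lemma wtE n (x : 'cV[F]_n) : wt x = (\sum_i (x i 0%R != 0%R))%N.
Proof.
rewrite /wt -sum1_card big_mkcond /=; apply: eq_bigr => i _.
by rewrite inE; case: (_ != _).
Qed.

Lemma wt_mxvec m n (f : 'I_m -> 'cV[F]_n) :
  wt ((mxvec (\matrix_(r, q) f r q 0))^T) = (\sum_r wt (f r))%N.
Proof.
rewrite wtE (reindex _ (@curry_mxvec_bij m n)) /=.
under [RHS]eq_bigr do rewrite wtE.
rewrite pair_big /=; apply: eq_bigr => [[r q]] _ /=.
by rewrite !mxE mxvecE mxE.
Qed.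

Lemma wtZ n (c : F) (x : 'cV[F]_n) : c != 0 -> wt (c *: x) = wt x.
Proof. by move=> c0; rewrite !wtE; apply: eq_bigr => i _; rewrite mxE mulf_eq0 (negbTE c0). Qed.

Lemma wt0 n : wt (0 : 'cV[F]_n) = 0%N.
Proof. by rewrite wtE big1 // => i _; rewrite mxE eqxx. Qed.
End W.
Section Main.
Variables (F : fieldType) (n k : nat) (B : k.-tuple 'cV[F]_n).

Definition blockv (c : 'I_k.+1 -> F) (r : 'I_k.+1) : 'cV[F]_n :=
  \sum_m c m *: blk B (eo r m).

Lemma combE c : \sum_m c m *: basis_vec B m =
   (mxvec (\matrix_(r, q) blockv c r q 0))^T.
Proof.
apply/matrixP => i j; rewrite summxE !mxE (ord1 j).
case/mxvec_indexP: i => r q; rewrite mxvecE mxE summxE.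
by apply: eq_bigr => m _; rewrite !mxE mxvecE mxE.
Qed.

Lemma bv_mx m : basis_vec B m = (mxvec (\matrix_(r, q) blk B (eo r m) q 0))^T.
Proof. by []. Qed.

Lemma blk_lift (j : 'I_k) : blk B (lift ord0 j) = tnth B j.
Proof. by rewrite lift0 /= (tnth_nth 0). Qed.

Lemma blockvE c r : blockv c r = \sum_(j < k) c (eo r (lift ord0 j)) *: tnth B j.
Proof.
rewrite /blockv (reindex_inj (inv_inj (@eoK k r))).
under eq_bigr do rewrite eoK.
rewrite big_ord_recl /= scaler0 add0r.
by apply: eq_bigr => j _; rewrite add0n (tnth_nth 0).
Qed.

Lemma wt_comb c : wt (\sum_m c m *: basis_vec B m) = (\sum_r wt (blockv c r))%N.
Proof. by rewrite combE wt_mxvec. Qed.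

Lemma blockv_mem c r : blockv c r \in <<B>>%VS.
Proof.
rewrite blockvE; apply: memv_suml => j _; apply: memvZ.
by apply: memv_span; apply: mem_tnth.
Qed.

Lemma blockv0 c r : free B -> blockv c r = 0 -> forall m, m != r -> c m = 0.
Proof.
move=> /freeP fB; rewrite blockvE => h m mr.
have := fB (fun j => c (eo r (lift ord0 j))).
have -> : (\sum_(i < k) c (eo r (lift ord0 i)) *: B`_i) = 0.
  by rewrite -[RHS]h; apply: eq_bigr => j _; rewrite (tnth_nth 0).
move=> /(_ erefl) H.
case: (unliftP ord0 (eo r m)) => [j ej|e0].
  by move: (H j); rewrite -ej eoK.
by move: mr; rewrite -(eoK r m) e0 eo0 eqxx.
Qed.

Lemma comb0 c : (\sum_m c m *: basis_vec B m = 0) -> forall r, blockv c r = 0.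
Proof.
rewrite combE => /eqP; rewrite trmx_eq0 mxvec_eq0 => /eqP M0 r.
apply/matrixP => q j; rewrite (ord1 j).
by move/matrixP: M0 => /(_ r q); rewrite !mxE.
Qed.

Lemma wt_bv m (u : nat) : (forall j, wt (tnth B j) = u) -> wt (basis_vec B m) = (k * u)%N.
Proof.
move=> wu; rewrite bv_mx wt_mxvec.
have -> : (\sum_r wt (blk B (eo r m)))%N = (\sum_(t : 'I_k.+1) wt (blk B t))%N.
  by rewrite [RHS](reindex_inj (@eo_injl k m)).
rewrite big_ord_recl /= wt0 add0n.
under eq_bigr do rewrite add0n -tnth_nth wu.
by rewrite big_const_ord iter_addn_0 mulnC.
Qed.

Lemma free_Basis : (0 < k)%N -> free B -> free (Basis B).
Proof.
move=> k0 fB; apply/freeP => c h i.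
have h' : \sum_m c m *: basis_vec B m = 0.
  by rewrite -[RHS]h; apply: eq_bigr => m _; rewrite -tnth_nth tnth_mktuple.
pose r : 'I_k.+1 := if i == ord0 then ord_max else ord0.
apply: (blockv0 fB (comb0 h' r)).
rewrite /r; case: (eqVneq i ord0) => [->|ne]; last by [].
by rewrite -val_eqE /= eq_sym -lt0n.
Qed.

End Main.
Section Bounds.
Variables (F : fieldType) (n k : nat) (B : k.-tuple 'cV[F]_n).

Lemma card_neq (r0 : 'I_k.+1) : #|[set x | x != r0]| = k.
Proof.
rewrite (eq_card (B := predC1 r0)) ?cardC1 ?card_ord // => x.
by rewrite !inE.
Qed.

Lemma two_zero (c : 'I_k.+1 -> F) r s : free B -> r != s ->
  blockv B c r = 0 -> blockv B c s = 0 -> forall m, c m = 0.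
Proof.
move=> fB rs hr hs m; case: (eqVneq m r) => [->|mr].
  by apply: (blockv0 fB hs).
by apply: (blockv0 fB hr).
Qed.

Lemma comb_lb (c : 'I_k.+1 -> F) d : free B ->
  (forall x, x \in <<B>>%VS -> x != 0 -> (d <= wt x)%N) -> (exists m, c m != 0) ->
  (k * d <= wt (\sum_m c m *: basis_vec B m))%N /\
  ((forall r, blockv B c r != 0) -> (k.+1 * d <= wt (\sum_m c m *: basis_vec B m))%N).
Proof.
move=> fB md [m cm]; rewrite wt_comb.
have lbr r : blockv B c r != 0 -> (d <= wt (blockv B c r))%N.
  by move=> h; apply: md => //; apply: blockv_mem.
split; last first.
  move=> nz; rewrite (_ : (k.+1 * d = \sum_(r < k.+1) d)%N); last by rewrite big_const_ord iter_addn_0 mulnC.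
  by apply: leq_sum => r _; apply: lbr.
case: (boolP [exists r, blockv B c r == 0]) => [/existsP [r0 /eqP h0]|].
  rewrite (bigD1 r0) //=.
  rewrite {1}(_ : (k * d = \sum_(r < k.+1 | r != r0) d)%N); last by rewrite sum_nat_cond_const card_neq.
  apply: leq_trans (leq_addl _ _); apply: leq_sum => r rr0; apply: lbr.
  apply/eqP => hr; move: cm; rewrite (two_zero fB rr0 hr h0) eqxx //.
rewrite negb_exists => /forallP nz.
apply: leq_trans (leq_mul (leqnSn k) (leqnn d)) _.
rewrite (_ : (k.+1 * d = \sum_(r < k.+1) d)%N); last by rewrite big_const_ord iter_addn_0 mulnC.
by apply: leq_sum => r _; apply: lbr.
Qed.

Lemma comb_delta (c : 'I_k.+1 -> F) r0 : free B -> blockv B c r0 = 0 ->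
  \sum_m c m *: basis_vec B m = c r0 *: basis_vec B r0.
Proof.
move=> fB h0; rewrite (bigD1 r0) //= big1 ?addr0 // => m mr.
by rewrite (blockv0 fB h0 mr) scale0r.
Qed.

End Bounds.
Lemma ex_min (P : nat -> Prop) : (exists n, P n) ->
  exists n, P n /\ forall m, P m -> (n <= m)%N.
Proof.
move=> [n0 Pn0]; apply: NNPP => H.
suff: forall N m, (m < N)%N -> ~ P m by move/(_ n0.+1 n0 (ltnSn _)).
elim=> [//|N IH] m; rewrite ltnS leq_eqVlt => /orP[/eqP -> PN|]; last exact: IH.
apply: H; exists N; split=> // m' Pm'; case: (leqP N m') => // lt.
by exfalso; exact: IH _ lt Pm'.
Qed.

Lemma md_uniq (F : fieldType) n (C : {vspace 'cV[F]_n}) a b :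
  is_min_dist C a -> is_min_dist C b -> a = b.
Proof.
move=> [[x xC [xnz wx]] ha] [[y yC [ynz wy]] hb]; apply/anti_leq/andP; split.
  by rewrite -wy; exact: ha.
by rewrite -wx; exact: hb.
Qed.

Lemma rat1 (D U K : nat) : (0 < K)%N ->
  (D%:R * (1 + (K%:R)^-1) <= (U%:R : rat)) = (D * K.+1 <= U * K)%N.
Proof.
move=> K0; have K0' : (K%:R : rat) != 0 by rewrite pnatr_eq0 -lt0n.
rewrite (_ : D%:R * (1 + K%:R^-1) = (D * K.+1)%:R / K%:R); last first.
  by rewrite natrM -addn1 natrD; field.
by rewrite ler_pdivrMr ?ltr0n // -natrM ler_nat.
Qed.

Lemma rat2 (D U K : nat) : (0 < K)%N ->
  (D%:R * (1 + 2 * (K%:R)^-1) <= (U%:R : rat)) = (D * K.+2 <= U * K)%N.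
Proof.
move=> K0; have K0' : (K%:R : rat) != 0 by rewrite pnatr_eq0 -lt0n.
rewrite (_ : D%:R * (1 + 2 * K%:R^-1) = (D * K.+2)%:R / K%:R); last first.
  by rewrite natrM -addn2 natrD; field.
by rewrite ler_pdivrMr ?ltr0n // -natrM ler_nat.
Qed.

Lemma rat3 (D U K : nat) : (0 < K)%N ->
  ((K.+1 * D)%:R * (1 + (K.+1%:R)^-1) <= ((K * U)%:R : rat)) = (D * K.+2 <= U * K)%N.
Proof.
move=> K0; rewrite rat1 //.
rewrite (_ : (K.+1 * D * K.+2 = D * K.+2 * K.+1)%N); last by nia.
rewrite (_ : (K * U * K.+1 = U * K * K.+1)%N); last by nia.
by rewrite leq_pmul2r.
Qed.

Theorem proposition3p3 (F : fieldType) (n k d : nat)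
    (C : {vspace 'cV[F]_n}) (B : k.-tuple 'cV[F]_n) :
  basis_of C B -> is_code C k d ->
  (* (a) *)
  (basis_of (Code B) (Basis B) /\
   exists d', is_code (Code B) k.+1 d' /\ (k * d <= d')%N) /\
  (* (b) *)
  (forall u : nat, u_bounded C B u ->
     is_min_dist (Code B) (k.+1 * d) /\
     (u_bounded (Code B) (Basis B) (k * u) <->
      (d%:R * (1 + 2 * (k%:R)^-1) <= (u%:R : rat)))).
Proof.
move=> bCB [dimC mdC0]; have mdC := mdC0.
case: mdC => [[x0 x0C [x0nz wx0]] mdC].
have CB : <<B>>%VS = C := span_basis bCB.
case/andP: bCB => _ fB.
have k0 : (0 < k)%N.
  rewrite lt0n; apply/negP => /eqP k00.
  have : C = 0%VS by apply/eqP; rewrite -dimv_eq0 dimC k00.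
  by move=> C0; move: x0C; rewrite C0 memv0 (negbTE x0nz).
have fBB : free (Basis B) := free_Basis k0 fB.
have bas : basis_of (Code B) (Basis B) by rewrite /basis_of /Code eqxx fBB.
have md' : forall x, x \in <<B>>%VS -> x != 0 -> (d <= wt x)%N.
  by rewrite CB.
have rep : forall x, x \in Code B -> x = \sum_m coord (Basis B) m x *: basis_vec B m.
  move=> x xC; rewrite {1}(coord_span xC); apply: eq_bigr => m _.
  by rewrite -tnth_nth tnth_mktuple.
have nzc : forall x, x \in Code B -> x != 0 -> exists m, coord (Basis B) m x != 0.
  move=> x xC xnz; case: (boolP [exists m, coord (Basis B) m x != 0]) => [/existsP //|].
  rewrite negb_exists => /forallP h; move: xnz; rewrite (rep x xC) big1 ?eqxx //.
  by move=> m _; rewrite (eqP (negbNE (h m))) scale0r.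
have lb : forall x, x \in Code B -> x != 0 -> (k * d <= wt x)%N.
  move=> x xC xnz; rewrite (rep x xC).
  exact: (comb_lb fB md' (nzc x xC xnz)).1.
have memB' : forall m, basis_vec B m \in (Basis B : seq _).
  by move=> m; rewrite -(tnth_mktuple (basis_vec B) m); exact: mem_tnth.
have memB : forall m, basis_vec B m \in Code B.
  by move=> m; apply: memv_span; exact: memB'.
have dimCode : \dim (Code B) = k.+1 by move/eqP: fBB; rewrite size_tuple.
split.
  split=> //.
  have [d' [[y yC [ynz wy]] ymin]] := ex_min (P := fun w =>
      exists2 y, y \in Code B & y != 0 /\ wt y = w)
    (ex_intro _ (wt (basis_vec B ord0)) (ex_intro2 _ _ (basis_vec B ord0) (memB ord0)
      (conj (free_not0 fBB (memB' ord0)) erefl))).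
  exists d'; split; last by rewrite -wy; apply: lb.
  split=> //; split; first by exists y.
  by move=> x xC xnz; apply: ymin; exists x.
move=> u [u0 _ [d0 [md0 wu wsum ineq]]].
have dd0 : d0 = d := md_uniq md0 mdC0.
rewrite dd0 in wsum ineq.
move: ineq; rewrite rat1 // => ineq.
have lb2 : forall x, x \in Code B -> x != 0 -> (k.+1 * d <= wt x)%N.
  move=> x xC xnz; have := xnz; rewrite (rep x xC).
  set c := fun m => coord (Basis B) m x.
  case: (boolP [exists r, blockv B c r == 0]) => [/existsP [r0 /eqP h0]|].
    rewrite (comb_delta fB h0) => nz.
    have cr0 : c r0 != 0 by apply: contraNneq nz => ->; rewrite scale0r.
    rewrite wtZ // (wt_bv _ wu).
    by rewrite mulnC [(k * u)%N]mulnC.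
  rewrite negb_exists => /forallP nzb _.
  by apply: (comb_lb fB md' (nzc x xC xnz)).2 => r; apply: nzb.
set y1 := \sum_m basis_vec B m.
have y1C : y1 \in Code B by apply: memv_suml => m _; apply: memB.
have y1nz : y1 != 0.
  apply/eqP => h; move/freeP: fBB => /(_ (fun _ => 1)) H.
  have : (1 : F) = 0; last by apply/eqP; rewrite oner_eq0.
  apply: (H _ ord0); rewrite -[RHS]h; apply: eq_bigr => m _.
  by rewrite scale1r -tnth_nth tnth_mktuple.
have wy1 : wt y1 = (k.+1 * d)%N.
  rewrite /y1 (eq_bigr (fun m => 1 *: basis_vec B m)); last by move=> m _; rewrite scale1r.
  rewrite wt_comb (eq_bigr (fun _ => d)); first by rewrite big_const_ord iter_addn_0 mulnC.
  move=> r _; rewrite blockvE -wsum; congr wt; apply: eq_bigr => j _.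
  by rewrite scale1r.
have mdCode : is_min_dist (Code B) (k.+1 * d).
  split; first by exists y1.
  exact: lb2.
split=> //; rewrite rat2 //; split.
  move=> [_ _ [d'' [md'' _ _ ineq2]]].
  have e : d'' = (k.+1 * d)%N := md_uniq md'' mdCode.
  by move: ineq2; rewrite e rat3.
move=> h; split=> //; first by rewrite muln_gt0 k0.
exists (k.+1 * d)%N; split=> //; last by rewrite rat3.
  by move=> j; rewrite tnth_mktuple (wt_bv _ wu).
by rewrite (eq_bigr (fun m => basis_vec B m)) // => m _; rewrite tnth_mktuple.
Qed.
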